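(* Let $G=(V,E)$ be the path (chain) graph with $V=\{1,\dots,n\}$, $n\ge 2$, and $E=\{\{i,i+1\}: i=1,\dots,n-1\}$. Let $c\in\mathbb{R}^n$ have strictly positive components and $\rho>0$. For $k=1,\dots,n$ define $s_k=\sum_{1\le i\le k,\ i\equiv k \pmod 2}c_i^2$ (so $s_1=c_1^2$, $s_2=c_2^2$, $s_3=c_1^2+c_3^2$, $s_4=c_2^2+c_4^2$, ...). Then there exist strictly positive edge weights such that the weighted adjacency matrix $A$ satisfies $Ac=\rho c$ if and only if $$s_1<s_2<\dots<s_{n-1}\quad\text{and}\quad s_{n-1}=s_n,$$ i.e. $c_1^2<c_2^2<c_1^2+c_3^2<c_2^2+c_4^2<\dots<\sum_{i \text{ odd}}c_i^2=\sum_{i\text{ even}}c_i^2$.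
   Context: For positive edge weights $w_{ij}=w_{ji}$ ($\{i,j\}\in E$), the weighted adjacency matrix $A$ has $a_{ij}=w_{ij}$ if $\{i,j\}\in E$ and $a_{ij}=0$ otherwise. *)

(* Defs.v *)
From mathcomp Require Import all_boot all_order all_algebra.
Set Implicit Arguments. Unset Strict Implicit. Unset Printing Implicit Defensive.
Import Order.TTheory GRing.Theory Num.Theory.
Local Open Scope ring_scope.

(* Path graph on vertices 'I_n (0-based: vertex i here is vertex i+1 of the
   paper), edges {i, i+1}.  Edge weights are given by w : nat -> R, where
   w i is the weight of the edge {i, i+1} (only i < n-1 is relevant). *)
Definition path_edge (n : nat) (i j : 'I_n) : bool :=
  (i.+1 == j :> nat) || (j.+1 == i :> nat).

Definition path_adj (R : ringType) (n : nat) (w : nat -> R) : 'M[R]_n :=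
  \matrix_(i < n, j < n) (if path_edge i j then w (minn i j) else 0).

Definition alt_sq (R : ringType) (n : nat) (c : 'cV[R]_n) (k : nat) : R :=
  \sum_(i < n | (i <= k)%N && (odd i == odd k)) c i 0 ^+ 2.

(* Main.v *)
Require Import Defs.
From mathcomp Require Import all_boot all_order all_algebra.
From mathcomp Require Import zify ring.
Import Order.TTheory GRing.Theory Num.Theory.
Local Open Scope ring_scope.

Section Aux.
Variable R : realFieldType.

Lemma sum_delta N k (F : 'I_N.+1 -> R) :
  \sum_(j < N.+1) (if val j == k then F j else 0) =
  if (k < N.+1)%N then F (inord k) else 0.
Proof.
case: ifP => hk.
  rewrite (bigD1 (inord k)) //= inordK // eqxx big1 ?addr0 // => j hj.
  case: eqP => // hjk; move: hj; by rewrite -hjk inord_val eqxx.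
apply: big1 => j _; case: eqP => // hjk.
by move: (ltn_ord j); rewrite hjk hk.
Qed.

Variable m : nat.
Variable c : 'cV[R]_(m.+2).
Definition Cc (k : nat) : R := c (inord k) 0.

Lemma split_entry (w : nat -> R) (i j : 'I_(m.+2)) :
  (if path_edge i j then w (minn i j) else 0) * c j 0 =
  (if val j == i.+1 then w i * Cc i.+1 else 0) +
  (if val j == i.-1 then (if (0 < i)%N then w i.-1 * Cc i.-1 else 0) else 0).
Proof.
have hc : c j 0 = Cc j by rewrite /Cc inord_val.
rewrite /path_edge hc.
case: (boolP (i.+1 == j :> nat)) => [/eqP h1 | /eqP h1];
  case: (boolP (j.+1 == i :> nat)) => [/eqP h2 | /eqP h2] /=.
- exfalso; lia.
- rewrite -h1 eqxx.
  have -> : (i.+1 == i.-1) = false by apply/negbTE/eqP; lia.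
  rewrite /= addr0; congr (w _ * _); lia.
- have -> : (nat_of_ord j == i.+1) = false by apply/negbTE/eqP; lia.
  have -> : (nat_of_ord j == i.-1) = true by apply/eqP; lia.
  have -> : (0 < i)%N = true by lia.
  rewrite add0r (_ : minn i j = i.-1); last by lia.
  by rewrite (_ : (nat_of_ord j) = i.-1) //; lia.
- have -> : (nat_of_ord j == i.+1) = false by apply/negbTE/eqP; lia.
  case: (boolP (nat_of_ord j == i.-1)) => [/eqP h3|h3]; last by rewrite mul0r addr0.
  case: (boolP (0 < i)%N) => h4; last by rewrite mul0r addr0.
  exfalso; lia.
Qed.

Lemma rowE (w : nat -> R) (i : 'I_(m.+2)) :
  (path_adj (m.+2) w *m c) i 0 =
  (if (i.+1 < m.+2)%N then w i * Cc i.+1 else 0) +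
  (if (0 < i)%N then w i.-1 * Cc i.-1 else 0).
Proof.
rewrite !mxE.
under eq_bigr => j _ do rewrite mxE split_entry.
rewrite big_split /= !sum_delta.
by have -> : (i.-1 < m.+2)%N = true by have := ltn_ord i; lia.
Qed.

Lemma parity_aux (x k : nat) :
  ((x <= k.+2)%N && (odd x == odd k)) && (x != k.+2) = (x <= k)%N && (odd x == odd k).
Proof.
have [h|[h|h]] : (x < k.+2 \/ x = k.+2 \/ k.+2 < x)%N by lia.
- have -> : (x <= k.+2)%N = true by lia.
  have -> : (x != k.+2) = true by apply/eqP; lia.
  case: (boolP (x == k.+1)) => [/eqP -> | /eqP h1].
    by rewrite /= andbT; case: (odd k); rewrite ?leqnn // ltnn.
  have -> : (x <= k)%N = true by lia.
  by rewrite andbT.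
- subst x. rewrite eqxx andbF.
  by have -> : (k.+2 <= k)%N = false by lia.
- have -> : (x <= k.+2)%N = false by lia.
  by have -> : (x <= k)%N = false by lia.
Qed.

Definition s k := alt_sq c k.

Lemma s_rec k : (k.+2 < m.+2)%N -> s k.+2 = s k + Cc k.+2 ^+ 2.
Proof.
move=> hk; rewrite /s /alt_sq (bigD1 (inord k.+2)) /=; last first.
  by rewrite inordK // leqnn eqxx.
rewrite addrC; congr (_ + _).
apply: eq_bigl => i.
rewrite -(inj_eq val_inj) /= inordK // negbK.
exact: parity_aux.
Qed.

Lemma s0 : s 0 = Cc 0 ^+ 2.
Proof.
rewrite /s /alt_sq (bigD1 (inord 0)) /=; last by rewrite inordK.
rewrite big1 ?addr0 // => i /andP[/andP[hi _] hne].
move: hne; rewrite -(inj_eq val_inj) /= inordK // => /eqP hne; exfalso; lia.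
Qed.

Lemma s1 : s 1 = Cc 1 ^+ 2.
Proof.
rewrite /s /alt_sq (bigD1 (inord 1)) /=; last by rewrite inordK.
rewrite big1 ?addr0 // => i /andP[/andP[hi ho] hne].
move: hne ho; rewrite -(inj_eq val_inj) /= inordK // => /eqP hne.
by have -> : nat_of_ord i = 0%N by lia.
Qed.

Definition d i := s i - (if i is j.+1 then s j else 0).

Lemma dI i : (i.+1 < m.+2)%N -> d i.+1 + d i = Cc i.+1 ^+ 2.
Proof.
case: i => [|j] h; rewrite /d /=.
  rewrite s1; ring.
rewrite s_rec //; ring.
Qed.

Lemma rowN w i : (i < m.+2)%N ->
  (path_adj (m.+2) w *m c) (inord i) 0 =
  (if (i.+1 < m.+2)%N then w i * Cc i.+1 else 0) +
  (if (0 < i)%N then w i.-1 * Cc i.-1 else 0).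
Proof. by move=> h; rewrite rowE inordK. Qed.

End Aux.
Arguments Cc {R m} c k.
Arguments s {R m} c k.
Arguments d {R m} c i.
Arguments dI {R m} c i.
Arguments s0 {R m} c.
Arguments s1 {R m} c.
Arguments rowN {R m} c w i.
Arguments rowE {R m} c w i.

Theorem mainTheorem5 (R : realFieldType) (n : nat) (c : 'cV[R]_n) (rho : R) :
  (2 <= n)%N ->
  (forall i : 'I_n, 0 < c i 0) ->
  0 < rho ->
  (exists w : nat -> R,
      (forall i : nat, (i < n.-1)%N -> 0 < w i) /\
      path_adj n w *m c = rho *: c)
  <->
  ((forall k : nat, (k.+1 < n.-1)%N -> alt_sq c k < alt_sq c k.+1) /\
   alt_sq c (n.-2) = alt_sq c (n.-1)).
Proof.
move=> hn; case: n c hn => [|[|m]] c // _ hc hrho /=.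
have hC : forall k, 0 < Cc c k by move=> k; apply: hc.
have hnz : forall k, Cc c k != 0 by move=> k; apply: lt0r_neq0.
change (alt_sq c) with (s c).
split.
- move=> [w [hw heq]].
  have hr i (h : (i < m.+2)%N) :
    (if (i.+1 < m.+2)%N then w i * Cc c i.+1 else 0) +
    (if (0 < i)%N then w i.-1 * Cc c i.-1 else 0) = rho * Cc c i.
    by rewrite -rowN // heq mxE.
  have claim : forall i, (i < m.+1)%N -> w i * Cc c i * Cc c i.+1 = rho * d c i.
    elim=> [|i IH] hi.
      have := hr 0%N isT => /= h0; rewrite addr0 in h0.
      rewrite /d /= s0.
      have -> : w 0%N * Cc c 0 * Cc c 1 = (w 0%N * Cc c 1) * Cc c 0 by ring.
      rewrite h0; ring.
    have h2 : (i.+1 < m.+2)%N by lia.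
    have h := hr i.+1 h2.
    have e1 : (i.+2 < m.+2)%N by lia.
    rewrite e1 /= in h.
    have hd := dI c _ h2.
    have -> : d c i.+1 = Cc c i.+1 ^+ 2 - d c i by rewrite -hd; ring.
    have -> : w i.+1 * Cc c i.+1 * Cc c i.+2 =
      Cc c i.+1 * (w i.+1 * Cc c i.+2 + w i * Cc c i) - w i * Cc c i * Cc c i.+1
      by ring.
    rewrite h (IH (ltnW hi)); ring.
  have hdpos : forall i, (i < m.+1)%N -> 0 < d c i.
    move=> i hi; rewrite -(pmulr_rgt0 _ hrho) -claim //.
    by rewrite !mulr_gt0 // hw.
  split.
    move=> k hk; have := hdpos k.+1 hk; by rewrite /d /= subr_gt0.
  have hm := hr m.+1 (ltnSn _).
  rewrite ltnn /= add0r in hm.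
  have hd := dI c _ (ltnSn m.+1).
  have cl := claim m (ltnSn m).
  have : rho * d c m.+1 = 0.
    have -> : d c m.+1 = Cc c m.+1 ^+ 2 - d c m by rewrite -hd; ring.
    have -> : rho * (Cc c m.+1 ^+ 2 - d c m) =
       Cc c m.+1 * (rho * Cc c m.+1) - rho * d c m by ring.
    rewrite -hm -cl; ring.
  move/eqP; rewrite mulf_eq0 (gt_eqF hrho) /= /d /= subr_eq0 => /eqP ->.
  done.
- move=> [hlt heq].
  have hdpos : forall i, (i < m.+1)%N -> 0 < d c i.
    case=> [|k] hk; rewrite /d /=.
      by rewrite s0 subr0 exprn_gt0.
    by rewrite subr_gt0; apply: hlt.
  exists (fun i => rho * d c i / (Cc c i * Cc c i.+1)); split.
    move=> i hi; apply: divr_gt0; first by rewrite mulr_gt0 // hdpos.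
    by rewrite mulr_gt0.
  apply/matrixP => i j; rewrite (ord1 j) rowE mxE.
  have -> : c i 0 = Cc c i by rewrite /Cc inord_val.
  move: (ltn_ord i); move: (nat_of_ord i) => x hx.
  case: x hx => [|k] hk.
    rewrite /= addr0 /d /= s0.
    field; by rewrite ?hnz.
  case: (boolP (k.+2 < m.+2)%N) => hk2.
    rewrite /=.
    have hd := dI c k (ltnW hk2).
    have -> : d c k.+1 = Cc c k.+1 ^+ 2 - d c k by rewrite -hd; ring.
    field; by rewrite ?hnz.
  have ek : k = m by lia.
  subst k; rewrite /= add0r.
  have e : d c m.+1 = 0 by rewrite /d /= heq subrr.
  have hdm : d c m = Cc c m.+1 ^+ 2 by rewrite -(dI c _ (ltnSn m.+1)) e add0r.
  rewrite hdm; field; by rewrite ?hnz.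
Qed.
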